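(* Let $k \geq 2$ be an integer and suppose that for every admissible set $\mathcal{H}$ with $|\mathcal{H}| = k$, the difference set $\mathcal{D}(\mathcal{H})$ contains a weak Polignac number. Then \[ \liminf_{x \to \infty} \frac{\mathcal{P}(x)}{x} \;\geq\; \frac{2}{(k-1)\big((k-1)(k-2)+2\big)\,P(k)}. \]
   Context: A positive integer $d$ is a weak Polignac number if there are infinitely many pairs of primes $(p,q)$ with $q - p = d$. For real $x$, $\mathcal{P}(x)$ denotes the number of weak Polignac numbers less than or equal to $x$. A finite set of integers $\mathcal{H} = \{h_1, \ldots, h_k\}$ is admissible if for every prime $p$ there is an integer $m$ with $h_i \not\equiv m \pmod p$ for all $1 \le i \le k$. Its difference set is $\mathcal{D}(\mathcal{H}) = \{h_j - h_i : h_i, h_j \in \mathcal{H},\ h_i < h_j\}$. For an integer $k$, $P(k) = \prod_{p \le k,\ p \text{ prime}} p$ is the product of all primes not exceeding $k$. *)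

(* Defs.v *)
From Stdlib Require Import Reals ZArith Znumtheory List Classical ClassicalEpsilon.
Import ListNotations.

Open Scope Z_scope.

(* Since q is
   determined by p, "infinitely many pairs" is expressed as: p is unbounded. *)
Definition weak_polignac (d : Z) : Prop :=
  0 < d /\
  forall N : Z, exists p q : Z, N <= p /\ prime p /\ prime q /\ q - p = d.

(* A finite set of integers, represented by a duplicate-free list, is admissible. *)
Definition admissible (H : list Z) : Prop :=
  forall p : Z, prime p ->
    exists m : Z, forall h : Z, In h H -> h mod p <> m mod p.

Definition in_diff_set (H : list Z) (d : Z) : Prop :=
  exists hi hj : Z, In hi H /\ In hj H /\ hi < hj /\ d = hj - hi.

Definition primorial (k : nat) : Z :=
  fold_right Z.mul 1
    (filter (fun p => if prime_dec p then true else false)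
            (map Z.of_nat (seq 0 (S k)))).

Definition polignac_count_nat (n : nat) : nat :=
  length (filter
    (fun d : nat => if excluded_middle_informative (weak_polignac (Z.of_nat d))
                    then true else false)
    (seq 1 n)).

Definition polignac_count (x : R) : nat :=
  polignac_count_nat (Z.to_nat (Int_part x)).

Close Scope Z_scope.

(* Main.v *)
Require Import Defs.
From Stdlib Require Import Reals ZArith Znumtheory List Sorted Lia Lra Classical ClassicalEpsilon.
Import ListNotations.
Open Scope Z_scope.

Lemma nodup_map_inj {A B} (f : A -> B) (l : list A) :
  (forall x y, f x = f y -> x = y) -> NoDup l -> NoDup (map f l).
Proof. intros Hf Hl. apply NoDup_map_NoDup_ForallPairs; auto. intros x y _ _; apply Hf. Qed.

Lemma ss_nodup (l : list Z) : StronglySorted Z.lt l -> NoDup l.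
Proof.
  induction 1 as [|a l Hs IH Hf]; constructor; auto.
  intro Hin. rewrite Forall_forall in Hf. specialize (Hf a Hin). lia.
Qed.

Lemma ss_filter {A} (R : A -> A -> Prop) f l :
  StronglySorted R l -> StronglySorted R (filter f l).
Proof.
  induction 1 as [|a l Hs IH Hf]; simpl; [constructor|].
  destruct (f a); auto. constructor; auto.
  rewrite Forall_forall in *. intros x Hx. apply filter_In in Hx. apply Hf; tauto.
Qed.

Lemma ss_pair {A} (R : A -> A -> Prop) l a b :
  StronglySorted R l -> In a l -> In b l -> a = b \/ R a b \/ R b a.
Proof.
  induction 1 as [|c l Hs IH Hf]; simpl; [tauto|]. rewrite Forall_forall in Hf.
  intros [->|Ha] [->|Hb]; auto.
Qed.

Definition Rel (Wl : list Z) (a b : Z) : Prop := a < b /\ ~ In (b - a) Wl.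

Lemma greedy (Wl : list Z) : forall n (L : list Z), StronglySorted Z.lt L ->
  (length L > n * (length Wl + 1))%nat ->
  exists H, length H = S n /\ StronglySorted (Rel Wl) H /\ incl H L.
Proof.
  induction n as [|n IH]; intros L Hs Hlen.
  - destruct L as [|v t]; simpl in Hlen; [lia|]. exists [v]. split; [reflexivity|].
    split. constructor; constructor. intros x [->|[]]; left; auto.
  - destruct L as [|v t]; simpl in Hlen; [lia|].
    apply StronglySorted_inv in Hs. destruct Hs as [Hs Hf].
    set (g := fun r => if in_dec Z.eq_dec (r - v) Wl then false else true).
    assert (Hc : (length (filter (fun x => negb (g x)) t) <= length Wl)%nat).
    { set (t2 := filter (fun x => negb (g x)) t).
      replace (length t2) with (length (map (fun r => r - v) t2)) by apply length_map.
      apply NoDup_incl_length.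
      - apply nodup_map_inj; [intros; lia|]. apply ss_nodup, ss_filter, Hs.
      - intros y Hy. apply in_map_iff in Hy. destruct Hy as [r [<- Hr]].
        apply filter_In in Hr. destruct Hr as [_ Hr]. unfold g in Hr.
        destruct (in_dec Z.eq_dec (r - v) Wl); simpl in Hr; congruence. }
    pose proof (filter_length g t) as Hfl.
    destruct (IH (filter g t)) as [H' [H1 [H2 H3]]].
    + apply ss_filter, Hs.
    + lia.
    + exists (v :: H'). split; [simpl; lia|]. split.
      * constructor; auto. rewrite Forall_forall in *. intros r Hr.
        specialize (H3 r Hr). apply filter_In in H3. destruct H3 as [H3 H4].
        split; [apply Hf; auto|]. unfold g in H4.
        destruct (in_dec Z.eq_dec (r - v) Wl); simpl in H4; congruence.
      * intros x [->|Hx]; [left; auto|]. right. specialize (H3 x Hx).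
        apply filter_In in H3; tauto.
Qed.

Lemma fold_pos (l : list Z) : Forall (fun p => 0 < p) l -> 0 < fold_right Z.mul 1 l.
Proof. induction 1; simpl; lia. Qed.

Lemma fold_div (l : list Z) p : In p l -> (p | fold_right Z.mul 1 l).
Proof.
  induction l as [|a l IH]; simpl; [tauto|]. intros [->|H].
  - apply Z.divide_factor_l.
  - apply Z.divide_mul_r; auto.
Qed.

Lemma primorial_pos k : 0 < primorial k.
Proof.
  unfold primorial. apply fold_pos. rewrite Forall_forall. intros p Hp.
  apply filter_In in Hp. destruct Hp as [_ Hp]. destruct (prime_dec p); [|discriminate].
  pose proof (prime_ge_2 p p0). lia.
Qed.

Lemma primorial_div k p : prime p -> p <= Z.of_nat k -> (p | primorial k).
Proof.
  intros Hp Hk. apply fold_div. apply filter_In. split.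
  - apply in_map_iff. exists (Z.to_nat p). pose proof (prime_ge_2 p Hp).
    split; [lia|]. apply in_seq. lia.
  - destruct (prime_dec p); tauto.
Qed.

Lemma adm_mult (k : nat) (H : list Z) : length H = k ->
  admissible (map (fun j => j * primorial k) H).
Proof.
  intros Hl p Hp. pose proof (prime_ge_2 p Hp).
  destruct (Z_le_gt_dec p (Z.of_nat k)) as [Hle|Hgt].
  - exists 1. intros h Hh. apply in_map_iff in Hh. destruct Hh as [j [<- _]].
    rewrite (Z.mod_small 1) by lia.
    rewrite (proj2 (Z.mod_divide _ p ltac:(lia))); [lia|].
    apply Z.divide_mul_r, primorial_div; auto.
  - apply NNPP. intro Hn.
    assert (Hall : forall m, exists h, In h (map (fun j => j * primorial k) H) /\ h mod p = m mod p).
    { intro m. apply NNPP. intro Hm. apply Hn. exists m. intros h Hh Heq. apply Hm. eauto. }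
    assert (Hinc : incl (map Z.of_nat (seq 0 (Z.to_nat p)))
                        (map (fun h => h mod p) (map (fun j => j * primorial k) H))).
    { intros y Hy. apply in_map_iff in Hy. destruct Hy as [i [<- Hi]]. apply in_seq in Hi.
      destruct (Hall (Z.of_nat i)) as [h [Hh Heq]]. apply in_map_iff. exists h. split; auto.
      rewrite Heq. apply Z.mod_small. lia. }
    apply NoDup_incl_length in Hinc.
    + rewrite !length_map, length_seq in Hinc. lia.
    + apply nodup_map_inj; [intros; lia|]. apply seq_NoDup.
Qed.

Lemma ss_seq a n : StronglySorted Z.lt (map Z.of_nat (seq a n)).
Proof.
  revert a; induction n as [|n IH]; intro a; simpl; constructor; auto.
  rewrite Forall_forall. intros x Hx. apply in_map_iff in Hx. destruct Hx as [i [<- Hi]].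
  apply in_seq in Hi. lia.
Qed.

Lemma ss_impl {A} (R R' : A -> A -> Prop) l :
  (forall a b, R a b -> R' a b) -> StronglySorted R l -> StronglySorted R' l.
Proof.
  intros Himp. induction 1; constructor; auto. eapply Forall_impl; [|eassumption]. auto.
Qed.

Definition Wn (k n0 : nat) : list nat :=
  filter (fun j => if excluded_middle_informative
            (weak_polignac (Z.of_nat (j * Z.to_nat (primorial k)))) then true else false)
    (seq 1 (n0 / Z.to_nat (primorial k))).

Lemma Wn_count k n0 : (length (Wn k n0) <= polignac_count_nat n0)%nat.
Proof.
  pose proof (primorial_pos k) as HP. set (Pn := Z.to_nat (primorial k)).
  assert (HPn : (0 < Pn)%nat) by lia.
  replace (length (Wn k n0)) with (length (map (fun j => j * Pn)%nat (Wn k n0))) by apply length_map.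
  apply NoDup_incl_length.
  - apply nodup_map_inj; [intros; nia|]. apply NoDup_filter, seq_NoDup.
  - intros y Hy. apply in_map_iff in Hy. destruct Hy as [j [<- Hj]].
    unfold Wn in Hj. apply filter_In in Hj. destruct Hj as [Hj Hd]. apply in_seq in Hj.
    apply filter_In. split.
    + apply in_seq. pose proof (Nat.Div0.mul_div_le n0 Pn). fold Pn in Hj. nia.
    + fold Pn in Hd. revert Hd.
      destruct (excluded_middle_informative (weak_polignac (Z.of_nat (j * Pn)))); [|discriminate].
      intros _. destruct (excluded_middle_informative (weak_polignac (Z.of_nat (j * Pn)))); tauto.
Qed.

Lemma key (k : nat) (hk : (2 <= k)%nat)
  (hyp : forall H : list Z, NoDup H -> length H = k -> admissible H ->
           exists d : Z, in_diff_set H d /\ weak_polignac d) (n0 : nat) :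
  (n0 / Z.to_nat (primorial k) + 1 <= (k - 1) * (polignac_count_nat n0 + 1))%nat.
Proof.
  pose proof (primorial_pos k) as HP. set (Pn := Z.to_nat (primorial k)).
  set (N := (n0 / Pn)%nat).
  set (Wl := map Z.of_nat (Wn k n0)).
  pose proof (Wn_count k n0) as HWc.
  enough (~ (length (map Z.of_nat (seq 0 (S N))) > (k - 1) * (length Wl + 1))%nat) as Hn.
  { rewrite length_map, length_seq in Hn. unfold Wl in Hn. rewrite length_map in Hn. nia. }
  intro Hgt. destruct (greedy Wl (k - 1) _ (ss_seq 0 (S N)) Hgt) as [H [H1 [H2 H3]]].
  assert (HsH : StronglySorted Z.lt H).
  { eapply ss_impl; [|exact H2]. intros a b [? _]; auto. }
  destruct (hyp (map (fun j => j * primorial k) H)) as [d [[hi [hj [Hi [Hj [Hlt Hd]]]]] Hw]].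
  - apply nodup_map_inj; [intros; nia|]. apply ss_nodup; auto.
  - rewrite length_map. lia.
  - apply adm_mult. lia.
  - apply in_map_iff in Hi. destruct Hi as [a [<- Ha]].
    apply in_map_iff in Hj. destruct Hj as [b [<- Hb]].
    assert (Hab : a < b) by nia.
    destruct (ss_pair _ _ a b H2 Ha Hb) as [->|[[_ Hr]|[Hr _]]]; [lia| |lia].
    apply Hr. pose proof (H3 a Ha) as Ha'. pose proof (H3 b Hb) as Hb'.
    apply in_map_iff in Ha'. destruct Ha' as [a' [<- Ha']]. apply in_seq in Ha'.
    apply in_map_iff in Hb'. destruct Hb' as [b' [<- Hb']]. apply in_seq in Hb'.
    unfold Wl. apply in_map_iff. exists (b' - a')%nat. split; [lia|].
    unfold Wn. apply filter_In. split; [apply in_seq; fold Pn; fold N; lia|].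
    destruct excluded_middle_informative as [|Hno]; [reflexivity|]. exfalso; apply Hno.
    fold Pn. replace (Z.of_nat ((b' - a') * Pn)) with d; auto.
    rewrite Hd. rewrite Nat2Z.inj_mul. unfold Pn. rewrite Z2Nat.id by lia. nia.
Qed.
Close Scope Z_scope.
Open Scope R_scope.

Theorem theorem2 (k : nat) (hk : (2 <= k)%nat)
  (hyp : forall H : list Z, NoDup H -> length H = k -> admissible H ->
           exists d : Z, in_diff_set H d /\ weak_polignac d) :
  forall eps : R, 0 < eps ->
    exists X : R, forall x : R, X <= x ->
      2 / (INR (k - 1) * (INR (k - 1) * INR (k - 2) + 2) * IZR (primorial k)) - eps
        <= INR (polignac_count x) / x.
Proof.
  intros eps Heps. exists (1 + / eps). intros x Hx.
  assert (Hie : 0 < / eps) by (apply Rinv_0_lt_compat; lra).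
  assert (Hx1 : 1 <= x) by lra.
  pose proof (primorial_pos k) as HP.
  set (Pn := Z.to_nat (primorial k)).
  assert (HPR : IZR (primorial k) = INR Pn).
  { unfold Pn. rewrite INR_IZR_INZ, Z2Nat.id by lia. reflexivity. }
  set (n0 := Z.to_nat (Int_part x)).
  pose proof (base_Int_part x) as [Hb1 Hb2].
  assert (HI : (0 <= Int_part x)%Z).
  { apply le_IZR. lra. }
  assert (Hn0 : INR n0 = IZR (Int_part x)).
  { unfold n0. rewrite INR_IZR_INZ, Z2Nat.id by lia. reflexivity. }
  pose proof (key k hk hyp n0) as Hkey.
  assert (Hdiv : (n0 < Pn * (n0 / Pn + 1))%nat).
  { assert (Pn <> 0)%nat by lia. pose proof (Nat.div_mod n0 Pn H).
    pose proof (Nat.mod_upper_bound n0 Pn H). nia. }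
  set (c := polignac_count_nat n0) in *.
  assert (Hm : (Pn * (n0 / Pn + 1) <= Pn * ((k - 1) * (c + 1)))%nat)
    by (apply Nat.mul_le_mono_l; exact Hkey).
  assert (Hnat : (n0 + 1 <= (k - 1) * Pn * (c + 1))%nat).
  { rewrite (Nat.mul_comm (k-1) Pn), <- Nat.mul_assoc. lia. }
  apply le_INR in Hnat. rewrite !mult_INR, !plus_INR in Hnat. simpl INR in Hnat.
  unfold polignac_count. fold n0. fold c. rewrite HPR.
  set (K := INR (k - 1)) in *. set (P := INR Pn) in *.
  assert (HK : 1 <= K). { unfold K. replace 1 with (INR 1) by reflexivity. apply le_INR. lia. }
  assert (HP1 : 1 <= P). { unfold P. replace 1 with (INR 1) by reflexivity. apply le_INR. lia. }
  assert (Hk2 : 0 <= INR (k - 2)) by apply pos_INR.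
  assert (Hc : 0 <= INR c) by apply pos_INR.
  assert (Hxlt : x < K * P * (INR c + 1)) by lra.
  assert (H1 : 2 / (K * (K * INR (k - 2) + 2) * P) <= 1 / (K * P)).
  { unfold Rdiv. rewrite Rmult_1_l. apply Rmult_le_reg_r with (K * (K * INR (k - 2) + 2) * P).
    { assert (0 <= K * INR (k-2)) by nra. nra. }
    rewrite Rmult_assoc, Rinv_l by (assert (0 <= K * INR (k-2)) by nra; nra).
    replace (/ (K * P) * (K * (K * INR (k - 2) + 2) * P)) with (K * INR (k-2) + 2)
      by (field; lra). nra. }
  assert (H2 : 1 / (K * P) <= INR c / x + eps).
  { assert (Hxe : / x <= eps).
    { rewrite <- (Rinv_inv eps). apply Rinv_le_contravar; lra. }
    assert (1 / (K * P) < INR c / x + / x).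
    { apply Rmult_lt_reg_r with (K * P * x). nra.
      replace (1 / (K * P) * (K * P * x)) with x by (field; lra).
      replace ((INR c / x + / x) * (K * P * x)) with (K * P * (INR c + 1)) by (field; lra).
      lra. }
    lra. }
  lra.
Qed.
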